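(* Consider the opinion--action model described in the context with $\phi\in(0,1)$ and arbitrary initial values, and its augmented state matrices $P(t)$. Then for every $t\ge1$, the digraph $\mathcal{G}(P(t))$ has one of the following structures: (i) it is strongly connected; (ii) its condensation digraph consists of one sink and one or more singleton sources.
   Context: Fix an integer $n\ge 1$, agent set $\mathcal{V}=\{1,\dots,n\}$, a confidence threshold $\epsilon\in[0,1]$ and a decision weight $\phi\in[0,1]$. Each agent $i$ has opinion $x_i(t)\in[0,1]$ and action $y_i(t)\in[0,1]$. For $t\in\mathbb{Z}_{\ge0}$ the model evolves by: $\mathcal{N}_i(t)=\{j\in\mathcal{V}\mid j\neq i,\ |x_i(t)-y_j(t)|\le\epsilon\}$; $x_i(t+1)=\frac{x_i(t)+\sum_{j\in\mathcal{N}_i(t)}y_j(t)}{|\mathcal{N}_i(t)|+1}$; $y_i(t+1)=\phi\,x_i(t+1)+(1-\phi)\,y_{\mathrm{avg}}(t)$ with $y_{\mathrm{avg}}(t)=\frac1n\sum_{k=1}^n y_k(t)$. For $t\ge1$, $P(t)=\begin{bmatrix}P_{11}(t)&P_{12}(t)\\ P_{21}&P_{22}\end{bmatrix}\in\mathbb{R}^{2n\times2n}$ with $n\times n$ blocks: $[P_{11}(t)]_{ij}=\frac{1}{|\mathcal{N}_i(t)|+1}$ if $j=i$, $\frac{\phi}{|\mathcal{N}_i(t)|+1}$ if $j\in\mathcal{N}_i(t)$, and $0$ otherwise; $[P_{12}(t)]_{ij}=\frac{(1-\phi)|\mathcal{N}_i(t)|}{(|\mathcal{N}_i(t)|+1)n}$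 for all $i,j$; $P_{21}=\phi I_n$; $P_{22}=\frac{1-\phi}{n}\mathbf{1}_n\mathbf{1}_n^\top$. (With $z_i(t)=x_i(t)$, $z_{n+i}(t)=y_i(t-1)$ one has $\mathbf{z}(t+1)=P(t)\mathbf{z}(t)$.) For a nonnegative matrix $A\in\mathbb{R}^{m\times m}$, $\mathcal{G}(A)$ is the digraph on $\{1,\dots,m\}$ with a directed edge $(j,i)$ (from $j$ to $i$) iff $a_{ij}>0$. A strongly connected component (SCC) is a maximal strongly connected subgraph; the condensation digraph has the SCCs as nodes and an edge from SCC$_a$ to SCC$_b$ ($a\neq b$) iff some node of SCC$_a$ has an edge to some node of SCC$_b$. A source is a node with no incoming edges, a sink a node with no outgoing edges; a singleton SCC has exactly one node. *)

(* Defs.v *)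
From HB Require Import structures.
From mathcomp Require Import all_boot all_order all_algebra.
Set Implicit Arguments. Unset Strict Implicit. Unset Printing Implicit Defensive.
Import Order.TTheory GRing.Theory Num.Theory.
Local Open Scope ring_scope.

Definition nbr (R : realFieldType) (n : nat) (eps : R) (x y : 'I_n -> R)
    (i : 'I_n) : {set 'I_n} :=
  [set j | (j != i) && (`|x i - y j| <= eps)].

Definition oa_step (R : realFieldType) (n : nat) (eps phi : R)
    (xy : ('I_n -> R) * ('I_n -> R)) : ('I_n -> R) * ('I_n -> R) :=
  let x := xy.1 in let y := xy.2 in
  let N := nbr eps x y in
  let x' := fun i => (x i + \sum_(j in N i) y j) / (#|N i|%:R + 1) in
  let yavg := (\sum_(k < n) y k) / n%:R in
  (x', fun i => phi * x' i + (1 - phi) * yavg).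

Fixpoint oa_traj (R : realFieldType) (n : nat) (eps phi : R)
    (x0 y0 : 'I_n -> R) (t : nat) : ('I_n -> R) * ('I_n -> R) :=
  match t with
  | 0 => (x0, y0)
  | t'.+1 => oa_step eps phi (oa_traj eps phi x0 y0 t')
  end.

Definition Pmat (R : realFieldType) (n : nat) (phi : R)
    (N : 'I_n -> {set 'I_n}) : 'M[R]_(n + n) :=
  let P11 := \matrix_(i < n, j < n)
      (if j == i then 1 / (#|N i|%:R + 1)
       else if j \in N i then phi / (#|N i|%:R + 1) else 0) in
  let P12 := \matrix_(i < n, j < n)
      ((1 - phi) * #|N i|%:R / ((#|N i|%:R + 1) * n%:R)) in
  let P21 := (phi%:M : 'M[R]_n) in
  let P22 := (const_mx ((1 - phi) / n%:R) : 'M[R]_n) in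
  block_mx P11 P12 P21 P22.

Definition graph_rel (R : realFieldType) (m : nat) (A : 'M[R]_m) : rel 'I_m :=
  fun j i => 0 < A i j.

Definition scc (T : finType) (e : rel T) (u : T) : {set T} :=
  [set v | connect e u v && connect e v u].

Definition sccs (T : finType) (e : rel T) : {set {set T}} :=
  [set scc e u | u in T].

Definition cond_edge (T : finType) (e : rel T) (A B : {set T}) : bool :=
  (A != B) && [exists u in A, exists v in B, e u v].

Definition cond_source (T : finType) (e : rel T) (A : {set T}) : Prop :=
  forall B, B \in sccs e -> ~~ cond_edge e B A.

Definition cond_sink (T : finType) (e : rel T) (A : {set T}) : Prop :=
  forall B, B \in sccs e -> ~~ cond_edge e A B.

Definition strongly_connected (T : finType) (e : rel T) : Prop :=
  forall u v : T, connect e u v.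

Definition one_sink_singleton_sources (T : finType) (e : rel T) : Prop :=
  exists2 S, S \in sccs e &
    [/\ cond_sink e S,
        (forall A, A \in sccs e -> cond_sink e A -> A = S),
        (forall A, A \in sccs e -> A != S -> #|A| = 1%N /\ cond_source e A)
      & exists2 A, A \in sccs e & A != S].

(* Main.v *)
Require Import Defs.
From HB Require Import structures.
From mathcomp Require Import all_boot all_order all_algebra.
Import Order.TTheory GRing.Theory Num.Theory.
Local Open Scope ring_scope.

Lemma connect_back (T : finType) (e : rel T) (a : pred T) :
  (forall w z, e w z -> a z -> a w) ->
  forall w v, connect e w v -> a v -> a w.
Proof.
move=> H w v /connectP [p]; elim: p w => [|z p IH] w /=; first by move=> _ ->.
by case/andP=> ewz pz lv av; apply: (H w z ewz); apply: IH pz lv av.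
Qed.


Lemma e_ll (R : realFieldType) (n : nat) (phi : R) (N : 'I_n -> {set 'I_n}) i j :
  0 < phi -> graph_rel (Pmat phi N) (lshift n j) (lshift n i) = (j == i) || (j \in N i).
Proof.
move=> hp; rewrite /graph_rel /Pmat block_mxEul mxE.
have hk : 0 < (#|N i|%:R + 1 : R) by rewrite ltr_wpDl.
case: (j == i) => /=; first by rewrite divr_gt0.
by case: (j \in N i); rewrite ?divr_gt0 ?ltxx.
Qed.

Lemma e_rl (R : realFieldType) (n : nat) (phi : R) (N : 'I_n -> {set 'I_n}) i j :
  (0 < n)%N -> phi < 1 -> graph_rel (Pmat phi N) (rshift n j) (lshift n i) = (N i != set0).
Proof.
move=> hn hp; rewrite /graph_rel /Pmat block_mxEur mxE.
have hk : 0 < (#|N i|%:R + 1 : R) by rewrite ltr_wpDl.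
have hn' : 0 < (n%:R : R) by rewrite ltr0n.
rewrite -card_gt0; case: (posnP #|N i|) => [->|h].
  by rewrite mulr0 mul0r ltxx.
rewrite divr_gt0 ?mulr_gt0 ?subr_gt0 ?ltr0n //.
Qed.

Lemma e_lr (R : realFieldType) (n : nat) (phi : R) (N : 'I_n -> {set 'I_n}) i j :
  0 < phi -> graph_rel (Pmat phi N) (lshift n j) (rshift n i) = (j == i).
Proof.
move=> hp; rewrite /graph_rel /Pmat block_mxEdl mxE.
have pb : forall b : bool, (0 < phi *+ b) = b by case; rewrite ?mulr1n ?mulr0n ?ltxx.
by rewrite pb eq_sym.
Qed.

Lemma e_rr (R : realFieldType) (n : nat) (phi : R) (N : 'I_n -> {set 'I_n}) i j :
  (0 < n)%N -> phi < 1 -> graph_rel (Pmat phi N) (rshift n j) (rshift n i).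
Proof.
move=> hn hp; rewrite /graph_rel /Pmat block_mxEdr mxE.
by rewrite divr_gt0 ?subr_gt0 ?ltr0n.
Qed.


Lemma lr_neq (n : nat) (i k : 'I_n) : (lshift n i == rshift n k) = false.
Proof.
apply/negbTE/negP => /eqP /(congr1 val) /= h; have := ltn_ord i; rewrite h; by rewrite ltnNge leq_addr.
Qed.

Lemma main (R : realFieldType) (n : nat) (phi : R) (N : 'I_n -> {set 'I_n}) :
  (0 < n)%N -> 0 < phi < 1 ->
  strongly_connected (graph_rel (Pmat phi N)) \/
  one_sink_singleton_sources (graph_rel (Pmat phi N)).
Proof.
move=> hn /andP [hp0 hp1].
set e := graph_rel (Pmat phi N).
pose iso (u : 'I_(n + n)) := [exists i, (u == lshift n i) && (N i == set0)].
have k0 : 'I_n := Ordinal hn.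
have notiso_r : forall k, ~~ iso (rshift n k).
  move=> k; apply/existsP => [[i /andP [/eqP h _]]].
  by move: (@lr_neq n i k); rewrite h eqxx.
have F0 : forall w v, iso v -> e w v -> w = v.
  move=> w v /existsP [i /andP [/eqP -> /eqP Ni]].
  case: (split_ordP w) => j ->.
    by rewrite /e e_ll // Ni inE orbF => /eqP ->.
  by rewrite /e e_rl // Ni eqxx.
have F1 : forall u k, connect e u (rshift n k).
  move=> u k; case: (split_ordP u) => j ->.
    apply: (connect_trans (y := rshift n j)); apply: connect1.
      by rewrite /e e_lr.
    exact: e_rr.
  exact/connect1/e_rr.
have F2 : forall v k, ~~ iso v -> connect e (rshift n k) v.
  move=> v k; case: (split_ordP v) => j ->.
    move=> nj; apply: connect1; rewrite /e e_rl //.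
    apply/negP => /eqP h; move/existsP: nj; apply; exists j; by rewrite eqxx h eqxx.
  by move=> _; exact/connect1/e_rr.
have F3 : forall w v, connect e w v -> iso v -> w = v.
  move=> w v c iv.
  have := (@connect_back _ e (fun z => z == v)).
  move=> H; apply/eqP; apply: (H _ w v c) => //.
  by move=> a b eab /eqP bv; subst b; rewrite (F0 a v iv eab).
pose S := [set v | ~~ iso v].
have F4 : forall u, ~~ iso u -> scc e u = S.
  move=> u nu; apply/setP => v; rewrite !inE.
  case iv: (iso v) => /=.
    apply/negP => /andP [c _]; move: nu; by rewrite (F3 _ _ c iv) iv.
  apply/andP; split.
    exact: (connect_trans (F1 u k0) (F2 v k0 (negbT iv))).
  exact: (connect_trans (F1 v k0) (F2 u k0 nu)).
have F5 : forall u, iso u -> scc e u = [set u].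
  move=> u iu; apply/setP => v; rewrite !inE.
  apply/andP/eqP => [[_ c]|->]; first exact: F3 c iu.
  by rewrite connect0.
have SC : forall B, B \in sccs e -> B = S \/ exists2 u, iso u & B = [set u].
  move=> B /imsetP [u _ ->]; case iu: (iso u).
    by right; exists u => //; rewrite F5.
  by left; rewrite F4 // iu.
have uS : forall u, iso u -> (u \in S) = false.
  by move=> u iu; rewrite inE iu.
have S1 : forall u, iso u -> [set u] != S.
  move=> u iu; apply/negP => /eqP h; move: (uS u iu); by rewrite -h set11.
have Sin : S \in sccs e.
  apply/imsetP; exists (rshift n k0) => //; by rewrite F4.
have noin : forall B w, B \in sccs e -> iso w -> B != [set w] -> ~~ cond_edge e B [set w].
  move=> B w BS iw nB; apply/negP => /andP [_ /existsP [a /andP [aB /existsP [b /andP [bw eab]]]]].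
  move: bw; rewrite inE => /eqP bw; subst b.
  have aw := F0 a w iw eab; subst a.
  case: (SC B BS) => [BSe|[w' iw' Bw']].
    by move: aB; rewrite BSe uS.
  by move: aB nB; rewrite Bw' inE => /eqP ->; rewrite eqxx.
case: (boolP [exists u, iso u]) => [/existsP [u iu]|nex].
  right; exists S => //; split.
  - move=> B BS; case: (SC B BS) => [->|[w iw ->]]; first by rewrite /cond_edge eqxx.
    apply/negP => /andP [_ /existsP [a /andP [aS /existsP [b /andP [bw eab]]]]].
    move: bw; rewrite inE => /eqP bw; subst b.
    by move: aS; rewrite (F0 a w iw eab) uS.
  - move=> A AS sA; case: (SC A AS) => [//|[w iw Aw]]; subst A.
    move/existsP: iw (iw) => [i /andP [/eqP wi _]] iw.
    have := sA S Sin; rewrite /cond_edge S1 //=.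
    move/negP; case; apply/existsP; exists w; rewrite set11 /=.
    apply/existsP; exists (rshift n i); rewrite inE notiso_r /= wi /e e_lr //.
  - move=> A AS nA; case: (SC A AS) => [AS'|[w iw Aw]]; first by move: nA; rewrite AS' eqxx.
    subst A; split; first by rewrite cards1.
    move=> B BS; case: (boolP (B == [set w])) => [/eqP ->|nB].
      by rewrite /cond_edge eqxx.
    exact: noin.
  - exists [set u]; last exact: S1.
    by apply/imsetP; exists u => //; rewrite F5.
left => u v; apply: (connect_trans (F1 u k0)); apply: F2.
by apply/negP => iv; move/negP: nex; apply; apply/existsP; exists v.
Qed.

Theorem theorem2 (R : realFieldType) (n : nat) (eps phi : R)
    (x0 y0 : 'I_n -> R) :
  (1 <= n)%N ->
  0 <= eps <= 1 ->
  0 < phi < 1 ->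
  (forall i, 0 <= x0 i <= 1) ->
  (forall i, 0 <= y0 i <= 1) ->
  forall t : nat, (1 <= t)%N ->
    let xy := oa_traj eps phi x0 y0 t in
    let e := graph_rel (Pmat phi (nbr eps xy.1 xy.2)) in
    strongly_connected e \/ one_sink_singleton_sources e.
Proof.
move=> hn _ hp _ _ t _ xy e.
exact: main.
Qed.
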